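(* Let $P>0$, $\epsilon\in(0,P)$, $P'=P-\epsilon$. For each positive integer $\ell$ let $k_\ell\in(0,\ell]$ with $\lim_{\ell\to\infty}\ell e^{-\delta k_\ell}=0$ for every $\delta>0$; let $\delta_\ell=k_\ell^{-1/3}$ and $n(\ell)=\frac{\ell H_2(k_\ell/\ell)}{\frac12\log(1+k_\ell P)}$. Suppose $n(\ell)/k_\ell$ has a finite limit or diverges to $+\infty$, and set $n_0=(1+\epsilon)n(\ell)$ if $\lim n(\ell)/k_\ell>0$ and $n_0=\epsilon k_\ell$ if $\lim n(\ell)/k_\ell=0$. For an integer $a\ge1$ let $\mathcal W^{(\ell)}(a)$ be the set of integer pairs $(w_1,w_2)$ with $0\le w_1\le a$, $0\le w_2\le(1+\delta_\ell)k_\ell$, $w_1+w_2>0$ and $a+w_2\le(1+\delta_\ell)k_\ell+w_1$, and define $$h_{\lambda,\rho}(w_1,w_2)=-\frac{(1-\rho)n_0}{2k_\ell}\log(1+\lambda w_2P')+\frac{n_0}{2k_\ell}\log\big(1+\lambda(1-\lambda\rho)w_2P'+\lambda\rho(1-\lambda\rho)w_1P'\big)-\frac a{k_\ell}H_2\Big(\frac{w_1}a\Big)-\frac{\rho\ell}{k_\ell}H_2\Big(\frac{w_2}\ell\Big).$$ Then there exist $\ell^*>0$ and $c_0>0$ such that for every $\ell\ge\ell^*$, every integer $a$ with $1\le a\le(1+\delta_\ell)k_\ell$, and every $(w_1,w_2)\in\mathcal W^{(\ell)}(a)$, there exist $\lambda\in[0,\infty)$ and $\rho\in[0,1]$ with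 $h_{\lambda,\rho}(w_1,w_2)\ge c_0$.
   Context: Logarithms are natural; $H_2(p)=-p\log p-(1-p)\log(1-p)$ for $p\in[0,1]$. (Here $a$ plays the role of the number of truly active users, $w_1$ of the number of misses and $w_2$ of the number of false alarms.) *)

(* Defs.v *)
From Stdlib Require Import Reals.
From Coquelicot Require Import Coquelicot.
Open Scope R_scope.

(* Binary entropy in nats: H2(p) = -p ln p - (1-p) ln(1-p).
   Stdlib's ln is total with ln x = 0 for x <= 0, so H2 0 = H2 1 = 0. *)
Definition H2 (p : R) : R := - p * ln p - (1 - p) * ln (1 - p).

Definition nfun (P : R) (k : nat -> R) (l : nat) : R :=
  INR l * H2 (k l / INR l) / (/ 2 * ln (1 + k l * P)).

Definition deltaf (k : nat -> R) (l : nat) : R := Rpower (k l) (- (1 / 3)).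

Definition n0f (P eps : R) (k : nat -> R) (L : Rbar) (l : nat) : R :=
  if Rbar_lt_dec (Finite 0) L then (1 + eps) * nfun P k l else eps * k l.

Definition harg (P' lam rho w1 w2 : R) : R :=
  1 + lam * (1 - lam * rho) * w2 * P' + lam * rho * (1 - lam * rho) * w1 * P'.

Definition hfun (P' n0 kl l a lam rho w1 w2 : R) : R :=
  - ((1 - rho) * n0 / (2 * kl)) * ln (1 + lam * w2 * P')
  + n0 / (2 * kl) * ln (harg P' lam rho w1 w2)
  - a / kl * H2 (w1 / a)
  - rho * l / kl * H2 (w2 / l).

Definition inW (dl kl : R) (a w1 w2 : nat) : Prop :=
  (w1 <= a)%nat /\ INR w2 <= (1 + dl) * kl /\ (0 < w1 + w2)%nat /\
  INR a + INR w2 <= (1 + dl) * kl + INR w1.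

(* Main.v *)
Require Import Defs.
From Stdlib Require Import Reals Lra Psatz.
From Coquelicot Require Import Coquelicot.
Open Scope R_scope.

Lemma ln_nonpos x : x <= 0 -> ln x = 0.
Proof. intro H. unfold ln. destruct (Rlt_dec 0 x); [exfalso; lra|reflexivity]. Qed.

Lemma ln_le_sub1 y : 0 < y -> ln y <= y - 1.
Proof.
  intro Hy. rewrite <- (ln_exp (y - 1)). apply ln_le; [exact Hy|].
  pose proof (exp_ineq1_le (y-1)). lra.
Qed.

Lemma ln_tangent u v : 0 < u -> 0 < v -> ln u <= ln v + (u - v) / v.
Proof.
  intros Hu Hv. pose proof (ln_le_sub1 (u / v)) as H.
  rewrite ln_div in H by lra.
  assert (u / v - 1 = (u - v) / v) by (field; lra).
  assert (0 < u / v) by (apply Rdiv_lt_0_compat; lra). lra.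
Qed.

Lemma chord t Y : 0 <= t <= 1 -> 0 <= Y -> t * ln (1 + Y) <= ln (1 + t * Y).
Proof.
  intros Ht HY. set (v := 1 + t * Y).
  assert (Hv : 0 < v) by (unfold v; nra).
  pose proof (ln_tangent 1 v ltac:(lra) Hv) as H1.
  pose proof (ln_tangent (1 + Y) v ltac:(lra) Hv) as H2.
  rewrite ln_1 in H1.
  assert (E : (1 - t) * ((1 - v) / v) + t * ((1 + Y - v) / v) = 0).
  { unfold v in *. field. lra. }
  assert (A1 : 0 <= (1 - t) * (ln v + (1 - v) / v)) by (apply Rmult_le_pos; lra).
  assert (A2 : t * ln (1 + Y) <= t * (ln v + (1 + Y - v) / v)) by (apply Rmult_le_compat_l; lra).
  lra.
Qed.

Lemma H2_0 : H2 0 = 0.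
Proof. unfold H2. rewrite ln_nonpos by lra. replace (1 - 0) with 1 by ring. rewrite ln_1. ring. Qed.

Lemma H2_bound m x : 0 < m -> 0 < x -> m * H2 (x / m) <= x * (ln (m / x) + 1).
Proof.
  intros Hm Hx. unfold H2.
  assert (E1 : ln (x / m) = - ln (m / x)).
  { rewrite !ln_div by lra. ring. }
  rewrite E1.
  assert (H : - (m * ((1 - x / m) * ln (1 - x / m))) <= x).
  { destruct (Rle_dec (1 - x / m) 0) as [Hn|Hp].
    - rewrite (ln_nonpos _ Hn). lra.
    - set (y := 1 - x / m) in *. assert (Hy : 0 < y) by lra.
      pose proof (ln_le_sub1 (/ y) ltac:(apply Rinv_0_lt_compat; lra)) as Hl.
      rewrite ln_Rinv in Hl by lra.
      assert (Hmy : m * y = m - x) by (unfold y; field; lra).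
      assert (- ln y * (m * y) <= (/ y - 1) * (m * y)) by (apply Rmult_le_compat_r; nra).
      assert ((/ y - 1) * (m * y) = m - m * y) by (field; lra).
      nra. }
  assert (E2 : m * (- (x / m) * - ln (m / x)) = x * ln (m / x)) by (field; lra).
  nra.
Qed.

Lemma H2_lower K l : 0 < K -> K <= l -> ln (l / K) <= (l / K) * H2 (K / l).
Proof.
  intros HK Hl. unfold H2.
  assert (Hp : 0 < K / l <= 1).
  { split. apply Rdiv_lt_0_compat; lra. apply Rmult_le_reg_r with l; [lra|]. field_simplify; lra. }
  assert (H : (1 - K / l) * ln (1 - K / l) <= 0).
  { destruct (Rle_dec (1 - K / l) 0) as [Hn|Hq].
    - rewrite (ln_nonpos _ Hn). lra.
    - assert (ln (1 - K / l) <= 0). { rewrite <- ln_1. apply ln_le; lra. }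
      nra. }
  assert (E : (l / K) * (- (K / l) * ln (K / l)) = ln (l / K)).
  { rewrite !ln_div by lra. field. lra. }
  assert (0 < l / K) by (apply Rdiv_lt_0_compat; lra).
  nra.
Qed.

Lemma GL c K tau beta X D x c0 :
  0 < c -> 1 <= K -> 0 < tau < 1 -> 0 < beta -> 1 <= x <= X -> 0 <= D ->
  1 <= tau * beta * ln (1 + sqrt K * c) ->
  ln K / sqrt K + c0 <= tau * (1 - tau) * beta * ln (1 + c) ->
  (X / K) * D <= (1 - tau) * (1 - tau) * beta * ln (1 + X * c) ->
  (x / K) * (D + ln (K / x)) + c0 <= beta * ln (1 + x * c).
Proof.
  intros Hc HK Ht Hb Hx HD Heta HC1 HC2.
  assert (HsK : 0 < sqrt K) by (apply sqrt_lt_R0; lra).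
  assert (HsK2 : sqrt K * sqrt K = K) by (apply sqrt_sqrt; lra).
  assert (HlnK : 0 <= ln K) by (rewrite <- ln_1; apply ln_le; lra).
  assert (Hl1 : 0 <= ln (1 + x * c)) by (rewrite <- ln_1; apply ln_le; nra).
  assert (S1 : (x / K) * ln (K / x) <= ln K / sqrt K + tau * beta * ln (1 + x * c)).
  { destruct (Rle_dec x (sqrt K)) as [Hle|Hgt].
    - assert (ln (K / x) <= ln K).
      { apply ln_le. apply Rdiv_lt_0_compat; lra.
        apply Rmult_le_reg_r with x; [lra|]. field_simplify; nra. }
      assert (HlnKx : 0 <= ln (K / x)).
      { rewrite <- ln_1. apply ln_le; [lra|]. apply Rmult_le_reg_r with x; [lra|]. field_simplify; nra. }
      assert ((x / K) * ln (K / x) <= (x / K) * ln K).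
      { apply Rmult_le_compat_l; [apply Rdiv_le_0_compat; lra | lra]. }
      assert ((x / K) * ln K <= (sqrt K / K) * ln K).
      { apply Rmult_le_compat_r; [lra|]. unfold Rdiv. apply Rmult_le_compat_r; [|lra].
        apply Rlt_le, Rinv_0_lt_compat; lra. }
      assert (Hq : sqrt K / K = / sqrt K) by (rewrite <- HsK2 at 2; field; lra).
      assert (ln K / sqrt K = (sqrt K / K) * ln K) by (rewrite Hq; unfold Rdiv; ring).
      assert (0 <= tau * beta * ln (1 + x * c)) by (apply Rmult_le_pos; nra).
      lra.
    - assert (H1 : ln (K / x) <= K / x - 1) by (apply ln_le_sub1; apply Rdiv_lt_0_compat; lra).
      assert ((x / K) * ln (K / x) <= (x / K) * (K / x - 1)).
      { apply Rmult_le_compat_l; [apply Rdiv_le_0_compat; lra | lra]. }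
      assert ((x / K) * (K / x - 1) = 1 - x / K) by (field; lra).
      assert (0 < x / K) by (apply Rdiv_lt_0_compat; lra).
      assert (ln (1 + sqrt K * c) <= ln (1 + x * c)) by (apply ln_le; nra).
      assert (tau * beta * ln (1 + sqrt K * c) <= tau * beta * ln (1 + x * c))
        by (apply Rmult_le_compat_l; nra).
      assert (0 <= ln K / sqrt K) by (apply Rdiv_le_0_compat; lra).
      lra. }
  assert (S2 : tau * (1 - tau) * beta * ln (1 + c) <= tau * (1 - tau) * beta * ln (1 + x * c)).
  { apply Rmult_le_compat_l. apply Rmult_le_pos; [|lra]. nra. apply ln_le; nra. }
  assert (HX : 0 < X) by lra.
  assert (S3 : (x / X) * ln (1 + X * c) <= ln (1 + x * c)).
  { pose proof (chord (x / X) (X * c)) as Hch.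
    replace ((x / X) * (X * c)) with (x * c) in Hch by (field; lra).
    apply Hch. split. apply Rdiv_le_0_compat; lra.
    apply Rmult_le_reg_r with X; [lra|]. field_simplify; lra. nra. }
  assert (S4 : (x / X) * ((X / K) * D) <= (x / X) * ((1 - tau) * (1 - tau) * beta * ln (1 + X * c))).
  { apply Rmult_le_compat_l; [apply Rdiv_le_0_compat; lra | lra]. }
  assert (E4 : (x / X) * ((X / K) * D) = x / K * D) by (field; lra).
  assert (S5 : (1 - tau) * (1 - tau) * beta * ((x / X) * ln (1 + X * c)) <=
               (1 - tau) * (1 - tau) * beta * ln (1 + x * c)).
  { apply Rmult_le_compat_l; [|lra]. apply Rmult_le_pos; [nra|lra]. }
  assert (E5 : (x / X) * ((1 - tau) * (1 - tau) * beta * ln (1 + X * c)) =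
               (1 - tau) * (1 - tau) * beta * ((x / X) * ln (1 + X * c))) by ring.
  assert (E6 : beta * ln (1 + x * c) = tau * beta * ln (1 + x * c)
     + tau * (1 - tau) * beta * ln (1 + x * c) + (1 - tau) * (1 - tau) * beta * ln (1 + x * c)) by ring.
  assert (E7 : (x / K) * (D + ln (K / x)) = x / K * D + (x / K) * ln (K / x)) by ring.
  lra.
Qed.

Lemma Part c K tau beta X D x c0 M :
  0 < c -> 1 <= K -> 0 < tau < 1 -> 0 < beta -> 1 <= x <= X -> 0 <= D -> 0 < M ->
  ln (M / x) + 1 <= D + ln (K / x) ->
  1 <= tau * beta * ln (1 + sqrt K * c) ->
  ln K / sqrt K + c0 <= tau * (1 - tau) * beta * ln (1 + c) ->
  (X / K) * D <= (1 - tau) * (1 - tau) * beta * ln (1 + X * c) ->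
  M / K * H2 (x / M) + c0 <= beta * ln (1 + x * c).
Proof.
  intros Hc HK Ht Hb Hx HD HM Hln Q1 Q2 Q3.
  pose proof (GL c K tau beta X D x c0 Hc HK Ht Hb Hx HD Q1 Q2 Q3) as G.
  pose proof (H2_bound M x HM ltac:(lra)) as Hb2.
  assert (x * (ln (M / x) + 1) <= x * (D + ln (K / x))) by (apply Rmult_le_compat_l; lra).
  assert (E : M / K * H2 (x / M) = / K * (M * H2 (x / M))) by (field; lra).
  assert (E2 : x / K * (D + ln (K / x)) = / K * (x * (D + ln (K / x)))) by (field; lra).
  assert (/ K * (M * H2 (x / M)) <= / K * (x * (D + ln (K / x)))).
  { apply Rmult_le_compat_l. apply Rlt_le, Rinv_0_lt_compat; lra. lra. }
  lra.
Qed.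

Lemma mono_b t b b' L : 0 <= t -> b' <= b -> 0 <= L -> t * b' * L <= t * b * L.
Proof. intros. apply Rmult_le_compat_r; [lra|]. apply Rmult_le_compat_l; lra. Qed.

Lemma Core P eps tau K l d n0 Nmin c0 :
  0 < P -> 0 < eps -> eps < P -> 0 < tau <= 1/6 ->
  1 <= K -> K <= l -> 0 < d <= 1 -> 0 < Nmin -> Nmin <= n0 / (2 * K) -> 0 <= c0 ->
  1 <= tau * (tau * Nmin) * ln (1 + sqrt K * ((P - eps) / 4)) ->
  ln K / sqrt K + c0 <= tau * (1 - tau) * (tau * Nmin) * ln (1 + (P - eps) / 4) ->
  (2 * K / K) * (ln 2 + 1) <= (1 - tau) * (1 - tau) * (tau * Nmin) * ln (1 + 2 * K * ((P - eps) / 4)) ->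
  ((1 + d) * K / K) * (ln (l / K) + 1) <= (1 - tau) * (1 - tau) * ((1 - tau) * (n0 / (2 * K)))
       * ln (1 + (1 + d) * K * ((P - eps) / 4)) ->
  forall a w1 w2 : nat, (1 <= a)%nat -> INR a <= (1 + d) * K -> inW d K a w1 w2 ->
  0 < harg (P - eps) (1/2) 1 (INR w1) (INR w2) /\
  c0 <= hfun (P - eps) n0 K l (INR a) (1/2) 1 (INR w1) (INR w2).
Proof.
  intros HP He HeP Ht HK HKl Hd HN HNm Hc0 Heta HC1 HC2a HC2b a w1 w2 Ha Hal [Hw1 [Hw2 [Hs _]]].
  set (c := (P - eps) / 4) in *.
  assert (Hc : 0 < c) by (unfold c; lra).
  set (N := n0 / (2 * K)) in *.
  assert (Hw1p : 0 <= INR w1) by apply pos_INR.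
  assert (Hw2p : 0 <= INR w2) by apply pos_INR.
  assert (Ha1 : 1 <= INR a) by (apply (le_INR 1); exact Ha).
  assert (Hw1a : INR w1 <= INR a) by (apply le_INR; exact Hw1).
  assert (Eh : harg (P - eps) (1/2) 1 (INR w1) (INR w2) = 1 + (INR w1 + INR w2) * c).
  { unfold harg, c. field. }
  assert (Hsc : 0 <= (INR w1 + INR w2) * c) by nra.
  split. { rewrite Eh. lra. }
  assert (Ehf : hfun (P - eps) n0 K l (INR a) (1/2) 1 (INR w1) (INR w2) =
     N * ln (1 + (INR w1 + INR w2) * c) - INR a / K * H2 (INR w1 / INR a)
     - l / K * H2 (INR w2 / l)).
  { unfold hfun. rewrite Eh. unfold N. field. lra. }
  rewrite Ehf.
  assert (HlnS1 : ln (1 + INR w1 * c) <= ln (1 + (INR w1 + INR w2) * c)) by (apply ln_le; nra).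
  assert (HlnS2 : ln (1 + INR w2 * c) <= ln (1 + (INR w1 + INR w2) * c)) by (apply ln_le; nra).
  assert (HN0 : 0 < N) by lra.
  assert (Split : tau * N * ln (1 + INR w1 * c) + (1 - tau) * N * ln (1 + INR w2 * c)
                  <= N * ln (1 + (INR w1 + INR w2) * c)).
  { assert (tau * N * ln (1 + INR w1 * c) <= tau * N * ln (1 + (INR w1 + INR w2) * c))
      by (apply Rmult_le_compat_l; nra).
    assert ((1 - tau) * N * ln (1 + INR w2 * c) <= (1 - tau) * N * ln (1 + (INR w1 + INR w2) * c))
      by (apply Rmult_le_compat_l; nra).
    lra. }
  assert (Hl1c : 0 <= ln (1 + c)) by (rewrite <- ln_1; apply ln_le; lra).
  assert (HlsK : 0 <= ln (1 + sqrt K * c)).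
  { rewrite <- ln_1; apply ln_le; [lra|]. pose proof (sqrt_pos K). nra. }
  assert (Hl2K : 0 <= ln (1 + 2 * K * c)) by (rewrite <- ln_1; apply ln_le; nra).
  assert (P1 : INR a / K * H2 (INR w1 / INR a) + (if Nat.eqb w1 0 then 0 else c0)
               <= tau * N * ln (1 + INR w1 * c)).
  { destruct (Nat.eqb_spec w1 0) as [E|E].
    - subst w1. simpl. replace (0 / INR a) with 0 by (field; lra). rewrite H2_0.
      replace (1 + 0 * c) with 1 by ring. rewrite ln_1. lra.
    - assert (Hx1 : 1 <= INR w1) by (apply (le_INR 1); lia).
      apply (Part c K tau (tau * N) (2 * K) (ln 2 + 1) (INR w1) c0 (INR a)); try lra.
      + nra.
      + split; [lra|]. nra.
      + pose proof ln_lt_2; lra.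
      + assert (ln (INR a / INR w1) <= ln (2 * (K / INR w1))).
        { apply ln_le. apply Rdiv_lt_0_compat; lra.
          replace (2*(K/INR w1)) with ((2*K)/INR w1) by (field; lra).
          unfold Rdiv; apply Rmult_le_compat_r; [left; apply Rinv_0_lt_compat; lra | nra]. }
        rewrite ln_mult in H by (try apply Rdiv_lt_0_compat; lra). lra.
      + pose proof (mono_b tau (tau * N) (tau * Nmin) (ln (1 + sqrt K * c)) ltac:(lra) ltac:(nra) HlsK). lra.
      + pose proof (mono_b (tau * (1 - tau)) (tau * N) (tau * Nmin) (ln (1 + c)) ltac:(nra) ltac:(nra) Hl1c). lra.
      + pose proof (mono_b ((1 - tau) * (1 - tau)) (tau * N) (tau * Nmin) (ln (1 + 2 * K * c)) ltac:(nra) ltac:(nra) Hl2K). lra. }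
  assert (P2 : l / K * H2 (INR w2 / l) + (if Nat.eqb w2 0 then 0 else c0)
               <= (1 - tau) * N * ln (1 + INR w2 * c)).
  { destruct (Nat.eqb_spec w2 0) as [E|E].
    - subst w2. simpl. replace (0 / l) with 0 by (field; lra). rewrite H2_0.
      replace (1 + 0 * c) with 1 by ring. rewrite ln_1. lra.
    - assert (Hx1 : 1 <= INR w2) by (apply (le_INR 1); lia).
      assert (HlK : 0 <= ln (l / K)).
      { rewrite <- ln_1. apply ln_le; [lra|]. apply Rmult_le_reg_r with K; [lra|]. field_simplify; lra. }
      apply (Part c K tau ((1 - tau) * N) ((1 + d) * K) (ln (l / K) + 1) (INR w2) c0 l); try lra.
      + nra.
      + replace (l / INR w2) with ((l / K) * (K / INR w2)) by (field; lra).
        rewrite ln_mult by (apply Rdiv_lt_0_compat; lra). lra.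
      + pose proof (mono_b tau ((1 - tau) * N) (tau * Nmin) (ln (1 + sqrt K * c)) ltac:(lra) ltac:(nra) HlsK). lra.
      + pose proof (mono_b (tau * (1 - tau)) ((1 - tau) * N) (tau * Nmin) (ln (1 + c)) ltac:(nra) ltac:(nra) Hl1c). lra. }
  revert P1 P2.
  destruct (Nat.eqb_spec w1 0); destruct (Nat.eqb_spec w2 0); intros P1 P2; try lia; lra.
Qed.



Lemma A_bound P K l : 0 < P -> 0 < K -> K <= l ->
  ln (l / K) <= ((l * H2 (K / l) / (/ 2 * ln (1 + K * P))) / K) / 2 * ln (1 + K * P).
Proof.
  intros HP HK Hl.
  assert (0 < ln (1 + K * P)) by (rewrite <- ln_1; apply ln_increasing; nra).
  replace (((l * H2 (K / l) / (/ 2 * ln (1 + K * P))) / K) / 2 * ln (1 + K * P))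
    with ((l / K) * H2 (K / l)) by (field; lra).
  apply H2_lower; lra.
Qed.

Lemma Lam_bound P c K : 0 < c <= P -> 0 <= K ->
  ln (1 + K * P) <= ln (1 + K * c) + ln (P / c).
Proof.
  intros Hc HK. rewrite <- ln_mult.
  - apply ln_le; [nra|].
    assert (1 <= P / c) by (apply Rmult_le_reg_r with c; [lra|]; field_simplify; lra).
    replace ((1 + K * c) * (P / c)) with (P / c + K * P) by (field; lra). lra.
  - nra.
  - apply Rdiv_lt_0_compat; lra.
Qed.

Lemma C2L P eps K l d m0 nf :
  0 < P -> 0 < eps -> eps < P -> 1 <= K -> K <= l -> 0 < d -> d <= eps / 4 -> 0 < m0 ->
  nf = l * H2 (K / l) / (/ 2 * ln (1 + K * P)) ->
  m0 <= nf / K ->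
  (4 / eps) * ((1 + eps / 4) * ln (P / ((P - eps) / 4)) + (2 + eps / 2) / m0)
     <= ln (1 + K * ((P - eps) / 4)) ->
  let tau := eps / (6 * (1 + eps)) in
  ((1 + d) * K / K) * (ln (l / K) + 1) <= (1 - tau) * (1 - tau) * ((1 - tau) * ((1 + eps) * nf / (2 * K)))
       * ln (1 + (1 + d) * K * ((P - eps) / 4)).
Proof.
  intros HP He HeP HK HKl Hd Hde Hm0 Hnf Hm HW tau.
  set (c := (P - eps) / 4) in *.
  assert (Hc : 0 < c <= P) by (unfold c; lra).
  set (m := nf / K) in *.
  set (g := ln (P / c)) in *.
  set (lc := ln (1 + K * c)) in *.
  assert (Hg : 0 <= g).
  { unfold g. rewrite <- ln_1. apply ln_le; [lra|]. apply Rmult_le_reg_r with c; [lra|]. field_simplify; lra. }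
  assert (HA : ln (l / K) <= m / 2 * ln (1 + K * P)) by (unfold m; rewrite Hnf; apply A_bound; lra).
  assert (HL : ln (1 + K * P) <= lc + g) by (apply Lam_bound; lra).
  assert (HA0 : 0 <= ln (l / K)).
  { rewrite <- ln_1. apply ln_le; [lra|]. apply Rmult_le_reg_r with K; [lra|]. field_simplify; lra. }
  assert (HA2 : ln (l / K) <= m / 2 * (lc + g)) by (apply Rle_trans with (1 := HA); apply Rmult_le_compat_l; lra).
  assert (Hlc : 0 <= lc) by (unfold lc; rewrite <- ln_1; apply ln_le; nra).
  assert (HKc : 0 < K * c) by (apply Rmult_lt_0_compat; lra).
  assert (HdKc : K * c <= (1 + d) * K * c).
  { replace ((1 + d) * K * c) with (K * c + d * (K * c)) by ring.
    assert (0 <= d * (K * c)) by (apply Rmult_le_pos; lra). lra. }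
  assert (Hlc2 : lc <= ln (1 + (1 + d) * K * c)) by (unfold lc; apply ln_le; lra).
  assert (Ht : 0 < tau <= 1/6).
  { unfold tau. split. apply Rdiv_lt_0_compat; lra.
    apply Rmult_le_reg_r with (6 * (1 + eps)); [lra|]. field_simplify; lra. }
  assert (Htau3 : 1 + eps / 2 <= (1 - tau) * (1 - tau) * (1 - tau) * (1 + eps)).
  { assert (1 - 3 * tau <= (1 - tau) * (1 - tau) * (1 - tau)) by nra.
    assert ((1 - 3 * tau) * (1 + eps) = 1 + eps / 2) by (unfold tau; field; lra).
    nra. }
  replace ((1 - tau) * (1 - tau) * ((1 - tau) * ((1 + eps) * nf / (2 * K))))
    with (((1 - tau) * (1 - tau) * (1 - tau) * (1 + eps)) * (m / 2)) by (unfold m; field; lra).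
  replace ((1 + d) * K / K) with (1 + d) by (field; lra).
  assert (L1 : (1 + d) * (ln (l / K) + 1) <= (1 + eps / 4) * (m / 2 * (lc + g) + 1)).
  { apply Rle_trans with ((1 + eps / 4) * (ln (l / K) + 1)).
    apply Rmult_le_compat_r; lra. apply Rmult_le_compat_l; lra. }
  assert (R1 : (1 + eps / 2) * (m / 2) * lc <=
      ((1 - tau) * (1 - tau) * (1 - tau) * (1 + eps)) * (m / 2) * ln (1 + (1 + d) * K * c)).
  { apply Rle_trans with (((1 - tau) * (1 - tau) * (1 - tau) * (1 + eps)) * (m / 2) * lc).
    apply Rmult_le_compat_r; [lra|]. apply Rmult_le_compat_r; lra.
    apply Rmult_le_compat_l; [|lra]. apply Rmult_le_pos; lra. }
  assert (K1 : (2 + eps / 2) / m0 <= eps / 4 * lc - (1 + eps / 4) * g).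
  { assert (E : (4 / eps) * ((1 + eps / 4) * g + (2 + eps / 2) / m0) * (eps / 4)
              = (1 + eps / 4) * g + (2 + eps / 2) / m0) by (field; lra).
    assert ((4 / eps) * ((1 + eps / 4) * g + (2 + eps / 2) / m0) * (eps / 4) <= lc * (eps / 4))
      by (apply Rmult_le_compat_r; lra). lra. }
  assert (K2 : (1 + eps / 4) <= m / 2 * (eps / 4 * lc - (1 + eps / 4) * g)).
  { assert ((2 + eps / 2) / m0 * (m / 2) <= (eps / 4 * lc - (1 + eps / 4) * g) * (m / 2)).
    { apply Rmult_le_compat_r; lra. }
    assert ((2 + eps / 2) / m0 * (m / 2) = (1 + eps / 4) * (m / m0)) by (field; lra).
    assert (1 <= m / m0) by (apply Rmult_le_reg_r with m0; [lra|]; field_simplify; lra).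
    nra. }
  nra.
Qed.

Lemma C2R P eps K l d nf :
  0 < P -> 0 < eps -> eps < P -> 1 <= K -> K <= l -> 0 < d -> d <= 1 ->
  nf = l * H2 (K / l) / (/ 2 * ln (1 + K * P)) ->
  nf / K <= eps / 8 ->
  ln (P / ((P - eps) / 4)) + 16 / eps <= ln (1 + K * ((P - eps) / 4)) ->
  let tau := eps / (6 * (1 + eps)) in
  ((1 + d) * K / K) * (ln (l / K) + 1) <= (1 - tau) * (1 - tau) * ((1 - tau) * (eps * K / (2 * K)))
       * ln (1 + (1 + d) * K * ((P - eps) / 4)).
Proof.
  intros HP He HeP HK HKl Hd Hd1 Hnf Hm HW tau.
  set (c := (P - eps) / 4) in *.
  assert (Hc : 0 < c <= P) by (unfold c; lra).
  set (m := nf / K) in *.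
  set (g := ln (P / c)) in *.
  set (lc := ln (1 + K * c)) in *.
  assert (Hg : 0 <= g).
  { unfold g. rewrite <- ln_1. apply ln_le; [lra|]. apply Rmult_le_reg_r with c; [lra|]. field_simplify; lra. }
  assert (HA : ln (l / K) <= m / 2 * ln (1 + K * P)) by (unfold m; rewrite Hnf; apply A_bound; lra).
  assert (HL : ln (1 + K * P) <= lc + g) by (apply Lam_bound; lra).
  assert (HLp : 0 <= ln (1 + K * P)) by (rewrite <- ln_1; apply ln_le; nra).
  assert (HA0 : 0 <= ln (l / K)).
  { rewrite <- ln_1. apply ln_le; [lra|]. apply Rmult_le_reg_r with K; [lra|]. field_simplify; lra. }
  assert (HA2 : ln (l / K) <= eps / 16 * (lc + g)).
  { apply Rle_trans with (1 := HA).
    apply Rle_trans with (eps / 16 * ln (1 + K * P)).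
    apply Rmult_le_compat_r; lra. apply Rmult_le_compat_l; lra. }
  assert (Hlc : 0 <= lc) by (unfold lc; rewrite <- ln_1; apply ln_le; nra).
  assert (HKc : 0 < K * c) by (apply Rmult_lt_0_compat; lra).
  assert (HdKc : K * c <= (1 + d) * K * c).
  { replace ((1 + d) * K * c) with (K * c + d * (K * c)) by ring.
    assert (0 <= d * (K * c)) by (apply Rmult_le_pos; lra). lra. }
  assert (Hlc2 : lc <= ln (1 + (1 + d) * K * c)) by (unfold lc; apply ln_le; lra).
  assert (Ht : 0 < tau <= 1/6).
  { unfold tau. split. apply Rdiv_lt_0_compat; lra.
    apply Rmult_le_reg_r with (6 * (1 + eps)); [lra|]. field_simplify; lra. }
  assert (Htau3 : 1 / 2 <= (1 - tau) * (1 - tau) * (1 - tau)) by nra.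
  replace ((1 - tau) * (1 - tau) * ((1 - tau) * (eps * K / (2 * K))))
    with (((1 - tau) * (1 - tau) * (1 - tau)) * (eps / 2)) by (field; lra).
  replace ((1 + d) * K / K) with (1 + d) by (field; lra).
  assert (L1 : (1 + d) * (ln (l / K) + 1) <= 2 * (eps / 16 * (lc + g) + 1)).
  { apply Rle_trans with (2 * (ln (l / K) + 1)).
    apply Rmult_le_compat_r; lra. apply Rmult_le_compat_l; lra. }
  assert (R1 : (eps / 4) * lc <= ((1 - tau) * (1 - tau) * (1 - tau)) * (eps / 2) * ln (1 + (1 + d) * K * c)).
  { apply Rle_trans with (((1 - tau) * (1 - tau) * (1 - tau)) * (eps / 2) * lc).
    apply Rmult_le_compat_r; [lra|].
    replace (eps / 4) with (1 / 2 * (eps / 2)) by field.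
    apply Rmult_le_compat_r; lra.
    apply Rmult_le_compat_l; [|lra]. apply Rmult_le_pos; lra. }
  assert (K1 : (g + 16 / eps) * (eps / 8) <= lc * (eps / 8)) by (apply Rmult_le_compat_r; lra).
  assert ((g + 16 / eps) * (eps / 8) = g * (eps / 8) + 2) by (field; lra).
  lra.
Qed.

Lemma lnbig c W : 0 < c -> exists Kb, forall K, Kb <= K -> W <= ln (1 + K * c).
Proof.
  intros Hc. exists ((exp W - 1) / c). intros K HK.
  rewrite <- (ln_exp W). apply ln_le. apply exp_pos.
  assert ((exp W - 1) / c * c <= K * c) by (apply Rmult_le_compat_r; lra).
  replace ((exp W - 1) / c * c) with (exp W - 1) in H by (field; lra). lra.
Qed.

Lemma sqrtbig c W : 0 < c -> exists Kb, forall K, Kb <= K -> W <= ln (1 + sqrt K * c).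
Proof.
  intros Hc. destruct (lnbig c W Hc) as [Kb HKb].
  exists (Rmax 0 Kb * Rmax 0 Kb). intros K HK. apply HKb.
  apply Rle_trans with (Rmax 0 Kb); [apply Rmax_r|].
  rewrite <- (sqrt_square (Rmax 0 Kb)) by apply Rmax_l.
  apply sqrt_le_1_alt. exact HK.
Qed.

Lemma lnsqrt c0 : 0 < c0 -> exists Kb, forall K, Kb <= K -> ln K / sqrt K <= c0.
Proof.
  intros Hc0. set (x := 4 / c0).
  assert (Hx : 0 < x) by (unfold x; apply Rdiv_lt_0_compat; lra).
  exists (Rmax 1 (x * x * (x * x))). intros K HK.
  assert (HK1 : 1 <= K) by (apply Rle_trans with (2 := HK); apply Rmax_l).
  assert (HK2 : x * x * (x * x) <= K) by (apply Rle_trans with (2 := HK); apply Rmax_r).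
  set (s := sqrt (sqrt K)).
  assert (Hs0 : 0 <= sqrt K) by apply sqrt_pos.
  assert (HsK : sqrt K * sqrt K = K) by (apply sqrt_sqrt; lra).
  assert (Hss : s * s = sqrt K) by (apply sqrt_sqrt; lra).
  assert (Hxs : x <= s).
  { unfold s. rewrite <- (sqrt_square x) by lra. apply sqrt_le_1_alt.
    rewrite <- (sqrt_square (x * x)) by nra. apply sqrt_le_1_alt. exact HK2. }
  assert (Hsp : 0 < s) by lra.
  assert (ElnK : ln K = 4 * ln s).
  { rewrite <- HsK, <- Hss. rewrite !ln_mult by nra. ring. }
  assert (Hls : ln s <= s - 1) by (apply ln_le_sub1; lra).
  rewrite ElnK, <- Hss.
  apply Rmult_le_reg_r with (s * s); [nra|].
  replace (4 * ln s / (s * s) * (s * s)) with (4 * ln s) by (field; lra).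
  assert (Hxc : x * c0 = 4) by (unfold x; field; lra).
  assert (A1 : c0 * x * s <= c0 * s * s).
  { apply Rmult_le_compat_r; [lra|]. apply Rmult_le_compat_l; lra. }
  assert (A2 : 4 * s = c0 * x * s) by (rewrite <- Hxc; ring).
  replace (c0 * (s * s)) with (c0 * s * s) by ring.
  lra.
Qed.

Lemma dsmall e : 0 < e -> exists Kb, forall K, Kb <= K -> 0 < K -> Rpower K (- (1/3)) <= e.
Proof.
  intros He. exists (exp (-3 * ln e)). intros K HK HK0.
  unfold Rpower. rewrite <- (exp_ln e) by lra.
  assert (-3 * ln e <= ln K).
  { rewrite <- (ln_exp (-3 * ln e)). apply ln_le; [apply exp_pos | lra]. }
  destruct (Req_dec (- (1/3) * ln K) (ln e)) as [E|E]. rewrite E; lra.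
  left. apply exp_increasing. lra.
Qed.

Lemma Klarge (k : nat -> R) :
  (forall l : nat, (1 <= l)%nat -> 0 < k l <= INR l) ->
  (forall delta : R, 0 < delta ->
     is_lim_seq (fun l : nat => INR l * exp (- delta * k l)) 0) ->
  forall B, exists N0, forall l, (N0 <= l)%nat -> B <= k l.
Proof.
  intros Hk Hlim B.
  pose proof (Hlim 1 ltac:(lra)) as H. apply is_lim_seq_spec in H.
  pose proof (H (mkposreal 1 ltac:(lra))) as [N1 HN1].
  pose proof is_lim_seq_INR as H2. apply is_lim_seq_spec in H2.
  destruct (H2 (exp B)) as [N2 HN2].
  exists (Nat.max N1 N2). intros l Hl.
  specialize (HN1 l ltac:(lia)). specialize (HN2 l ltac:(lia)). simpl in HN1.
  rewrite Rminus_0_r in HN1.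
  assert (Hl0 : 0 < INR l) by (pose proof (exp_pos B); lra).
  set (t := exp _) in HN1.
  assert (Ht : 0 < t) by apply exp_pos.
  assert (Hp : 0 < INR l * t) by (apply Rmult_lt_0_compat; lra).
  rewrite Rabs_pos_eq in HN1 by lra.
  assert (INR l < exp (k l)).
  { assert (E : t * exp (k l) = exp 0).
    { unfold t. rewrite <- exp_plus. f_equal. ring. }
    rewrite exp_0 in E.
    assert (INR l * t * exp (k l) < 1 * exp (k l))
      by (apply Rmult_lt_compat_r; [apply exp_pos|lra]).
    rewrite Rmult_assoc, E in H0. lra. }
  left. apply exp_lt_inv. lra.
Qed.

Lemma Gen P eps (k : nat -> R) (n0s : nat -> R) Nmin W N1 :
  0 < P -> 0 < eps -> eps < P ->
  (forall l : nat, (1 <= l)%nat -> 0 < k l <= INR l) ->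
  (forall B, exists N0, forall l, (N0 <= l)%nat -> B <= k l) ->
  0 < Nmin ->
  (forall l, (N1 <= l)%nat -> (1 <= l)%nat -> 1 <= k l ->
     Nmin <= n0s l / (2 * k l) /\
     forall d, 0 < d -> d <= eps / 4 -> d <= 1 -> W <= ln (1 + k l * ((P - eps) / 4)) ->
     let tau := eps / (6 * (1 + eps)) in
     ((1 + d) * k l / k l) * (ln (INR l / k l) + 1) <= (1 - tau) * (1 - tau) * ((1 - tau) * (n0s l / (2 * k l)))
       * ln (1 + (1 + d) * k l * ((P - eps) / 4))) ->
  exists lstar c0 : R, 0 < lstar /\ 0 < c0 /\
    forall l : nat, (1 <= l)%nat -> lstar <= INR l ->
    forall a : nat, (1 <= a)%nat -> INR a <= (1 + deltaf k l) * k l ->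
    forall w1 w2 : nat, inW (deltaf k l) (k l) a w1 w2 ->
    exists lam rho : R, 0 <= lam /\ 0 <= rho <= 1 /\
      0 < harg (P - eps) lam rho (INR w1) (INR w2) /\
      c0 <= hfun (P - eps) (n0s l) (k l) (INR l) (INR a)
              lam rho (INR w1) (INR w2).
Proof.
  intros HP He HeP Hk HKl HNm Hcase.
  set (tau := eps / (6 * (1 + eps))).
  assert (Ht : 0 < tau <= 1/6).
  { unfold tau. split. apply Rdiv_lt_0_compat; lra.
    apply Rmult_le_reg_r with (6 * (1 + eps)); [lra|]. field_simplify; lra. }
  set (c := (P - eps) / 4).
  assert (Hc : 0 < c) by (unfold c; lra).
  assert (Hl1c : 0 < ln (1 + c)) by (rewrite <- ln_1; apply ln_increasing; lra).
  set (c0 := tau * (1 - tau) * (tau * Nmin) * ln (1 + c) / 2).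
  assert (Hc0 : 0 < c0).
  { assert (Q1 : 0 < tau * (1 - tau)) by (apply Rmult_lt_0_compat; lra).
    assert (Q2 : 0 < tau * Nmin) by (apply Rmult_lt_0_compat; lra).
    assert (Q3 : 0 < tau * (1 - tau) * (tau * Nmin)) by (apply Rmult_lt_0_compat; lra).
    assert (Q4 : 0 < tau * (1 - tau) * (tau * Nmin) * ln (1 + c)) by (apply Rmult_lt_0_compat; lra).
    unfold c0. lra. }
  destruct (dsmall (Rmin (eps / 4) 1)) as [Kb2 HKb2].
  { apply Rmin_glb_lt; lra. }
  destruct (sqrtbig c (1 / (tau * (tau * Nmin))) Hc) as [Kb3 HKb3].
  destruct (lnsqrt c0 Hc0) as [Kb4 HKb4].
  destruct (lnbig c (2 * (ln 2 + 1) / ((1 - tau) * (1 - tau) * (tau * Nmin))) Hc) as [Kb5 HKb5].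
  destruct (lnbig c W Hc) as [Kb6 HKb6].
  set (Kb := Rmax 1 (Rmax Kb2 (Rmax Kb3 (Rmax Kb4 (Rmax Kb5 Kb6))))).
  destruct (HKl Kb) as [N0 HN0].
  exists (INR (Nat.max N0 N1) + 1), c0. split.
  { pose proof (pos_INR (Nat.max N0 N1)). lra. }
  split; [exact Hc0|].
  intros l Hl1 Hls a Ha Hal w1 w2 HW.
  assert (Hmax : (Nat.max N0 N1 <= l)%nat) by (apply INR_le; lra).
  set (K := k l) in *.
  assert (HK : Kb <= K) by (apply HN0; lia).
  assert (HK1 : 1 <= K) by (apply Rle_trans with (2 := HK); apply Rmax_l).
  assert (HK2 : Kb2 <= K).
  { apply Rle_trans with (2 := HK). unfold Kb.
    apply Rle_trans with (2 := Rmax_r _ _). apply Rmax_l. }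
  assert (HK3 : Kb3 <= K).
  { apply Rle_trans with (2 := HK). unfold Kb.
    apply Rle_trans with (2 := Rmax_r _ _). apply Rle_trans with (2 := Rmax_r _ _). apply Rmax_l. }
  assert (HK4 : Kb4 <= K).
  { apply Rle_trans with (2 := HK). unfold Kb.
    apply Rle_trans with (2 := Rmax_r _ _). apply Rle_trans with (2 := Rmax_r _ _).
    apply Rle_trans with (2 := Rmax_r _ _). apply Rmax_l. }
  assert (HK5 : Kb5 <= K).
  { apply Rle_trans with (2 := HK). unfold Kb.
    apply Rle_trans with (2 := Rmax_r _ _). apply Rle_trans with (2 := Rmax_r _ _).
    apply Rle_trans with (2 := Rmax_r _ _). apply Rle_trans with (2 := Rmax_r _ _). apply Rmax_l. }
  assert (HK6 : Kb6 <= K).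
  { apply Rle_trans with (2 := HK). unfold Kb.
    apply Rle_trans with (2 := Rmax_r _ _). apply Rle_trans with (2 := Rmax_r _ _).
    apply Rle_trans with (2 := Rmax_r _ _). apply Rle_trans with (2 := Rmax_r _ _). apply Rmax_r. }
  destruct (Hcase l ltac:(lia) Hl1 HK1) as [HNl HC2].
  set (d := deltaf k l) in *.
  assert (Hd0 : 0 < d) by (unfold d, deltaf, Rpower; apply exp_pos).
  assert (Hd1 : d <= Rmin (eps / 4) 1) by (unfold d, deltaf; apply (HKb2 K HK2); lra).
  assert (Hde : d <= eps / 4) by (apply Rle_trans with (1 := Hd1); apply Rmin_l).
  assert (Hd2 : d <= 1) by (apply Rle_trans with (1 := Hd1); apply Rmin_r).
  assert (HKl' : K <= INR l) by (apply Hk; exact Hl1).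
  exists (1/2), 1.
  assert (Hcore := Core P eps tau K (INR l) d (n0s l) Nmin c0 HP He HeP Ht HK1 HKl' (conj Hd0 Hd2)
     HNm HNl (Rlt_le _ _ Hc0)).
  destruct (Hcore) with (a := a) (w1 := w1) (w2 := w2) as [R1 R2]; try assumption.
  - pose proof (HKb3 K HK3) as Q.
    assert (0 < tau * (tau * Nmin)) by (apply Rmult_lt_0_compat; [lra|apply Rmult_lt_0_compat; lra]).
    assert (1 / (tau * (tau * Nmin)) * (tau * (tau * Nmin)) <= ln (1 + sqrt K * c) * (tau * (tau * Nmin)))
      by (apply Rmult_le_compat_r; lra).
    replace (1 / (tau * (tau * Nmin)) * (tau * (tau * Nmin))) with 1 in H0 by (field; lra).
    fold c. lra.
  - pose proof (HKb4 K HK4). fold c. unfold c0 in *. lra.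
  - pose proof (HKb5 K HK5) as Q.
    assert (Hp : 0 < (1 - tau) * (1 - tau) * (tau * Nmin)).
    { apply Rmult_lt_0_compat; [apply Rmult_lt_0_compat; lra|apply Rmult_lt_0_compat; lra]. }
    assert (ln (1 + K * c) <= ln (1 + 2 * K * c)) by (apply ln_le; nra).
    assert (2 * (ln 2 + 1) / ((1 - tau) * (1 - tau) * (tau * Nmin)) * ((1 - tau) * (1 - tau) * (tau * Nmin))
            <= ln (1 + 2 * K * c) * ((1 - tau) * (1 - tau) * (tau * Nmin)))
      by (apply Rmult_le_compat_r; lra).
    replace (2 * (ln 2 + 1) / ((1 - tau) * (1 - tau) * (tau * Nmin)) * ((1 - tau) * (1 - tau) * (tau * Nmin)))
      with (2 * (ln 2 + 1)) in H0 by (field; lra).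
    replace (2 * K / K) with 2 by (field; lra). fold c. lra.
  - apply HC2; try assumption. apply HKb6; exact HK6.
  - repeat split; try lra.
Qed.

Theorem lemma3 (P eps : R) (k : nat -> R) (L : Rbar) :
  0 < P -> 0 < eps -> eps < P ->
  (forall l : nat, (1 <= l)%nat -> 0 < k l <= INR l) ->
  (forall delta : R, 0 < delta ->
     is_lim_seq (fun l : nat => INR l * exp (- delta * k l)) 0) ->
  is_lim_seq (fun l : nat => nfun P k l / k l) L ->
  (is_finite L \/ L = p_infty) ->
  exists lstar c0 : R, 0 < lstar /\ 0 < c0 /\
    forall l : nat, (1 <= l)%nat -> lstar <= INR l ->
    forall a : nat, (1 <= a)%nat -> INR a <= (1 + deltaf k l) * k l ->
    forall w1 w2 : nat, inW (deltaf k l) (k l) a w1 w2 ->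
    exists lam rho : R, 0 <= lam /\ 0 <= rho <= 1 /\
      0 < harg (P - eps) lam rho (INR w1) (INR w2) /\
      c0 <= hfun (P - eps) (n0f P eps k L l) (k l) (INR l) (INR a)
              lam rho (INR w1) (INR w2).
Proof.
  intros HP He HeP Hk Hexp Hlim _.
  pose proof (Klarge k Hk Hexp) as HKl.
  apply is_lim_seq_spec in Hlim.
  destruct (Rbar_lt_dec (Finite 0) L) as [HL|HL].
  - assert (En : forall l, n0f P eps k L l = (1 + eps) * nfun P k l).
    { intro l. unfold n0f. destruct (Rbar_lt_dec (Finite 0) L); [reflexivity|contradiction]. }
    assert (Hm : exists m0 N1, 0 < m0 /\ forall l, (N1 <= l)%nat -> m0 <= nfun P k l / k l).
    { destruct L as [x| |]; simpl in HL, Hlim.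
      - destruct (Hlim (mkposreal (x / 2) ltac:(lra))) as [N1 HN1].
        exists (x / 2), N1. split; [lra|]. intros l Hl. specialize (HN1 l Hl). simpl in HN1.
        apply Rabs_lt_between in HN1. lra.
      - destruct (Hlim 1) as [N1 HN1]. exists 1, N1. split; [lra|].
        intros l Hl. specialize (HN1 l Hl). lra.
      - contradiction. }
    destruct Hm as [m0 [N1 [Hm0 HN1]]].
    apply (Gen P eps k (n0f P eps k L) ((1 + eps) * m0 / 2)
             ((4 / eps) * ((1 + eps / 4) * ln (P / ((P - eps) / 4)) + (2 + eps / 2) / m0)) N1);
      try assumption.
    + apply Rdiv_lt_0_compat; [apply Rmult_lt_0_compat|]; lra.
    + intros l HNl Hl1 HK1. rewrite En.
      assert (HmK := HN1 l HNl).
      split.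
      * assert ((1 + eps) * m0 / 2 <= (1 + eps) * (nfun P k l / k l) / 2).
        { apply Rmult_le_compat_r; [lra|]. apply Rmult_le_compat_l; lra. }
        replace ((1 + eps) * nfun P k l / (2 * k l)) with ((1 + eps) * (nfun P k l / k l) / 2)
          by (field; lra). exact H.
      * intros d Hd0 Hde Hd1 HW.
        apply (C2L P eps (k l) (INR l) d m0 (nfun P k l)); try assumption.
        apply Hk; exact Hl1.
        reflexivity.
  - assert (En : forall l, n0f P eps k L l = eps * k l).
    { intro l. unfold n0f. destruct (Rbar_lt_dec (Finite 0) L); [contradiction|reflexivity]. }
    assert (Hm : exists N1, forall l, (N1 <= l)%nat -> nfun P k l / k l <= eps / 8).
    { destruct L as [x| |]; simpl in HL, Hlim.
      - destruct (Hlim (mkposreal (eps / 8) ltac:(lra))) as [N1 HN1].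
        exists N1. intros l Hl. specialize (HN1 l Hl). simpl in HN1.
        apply Rabs_lt_between in HN1. lra.
      - exfalso. apply HL. exact I.
      - destruct (Hlim (eps / 8)) as [N1 HN1]. exists N1.
        intros l Hl. specialize (HN1 l Hl). lra. }
    destruct Hm as [N1 HN1].
    apply (Gen P eps k (n0f P eps k L) (eps / 2)
             (ln (P / ((P - eps) / 4)) + 16 / eps) N1); try assumption.
    + lra.
    + intros l HNl Hl1 HK1. rewrite En.
      split.
      * replace (eps * k l / (2 * k l)) with (eps / 2) by (field; lra). lra.
      * intros d Hd0 Hde Hd1 HW.
        apply (C2R P eps (k l) (INR l) d (nfun P k l)); try assumption.
        apply Hk; exact Hl1.
        reflexivity.
        apply HN1; exact HNl.
Qed.
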